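(* Let $\nu\in\mathbb{Z}_{\ge0}\cup\{\infty\}$ be a changepoint, $T$ a random sequence length and $\tau$ the detection time of an online changepoint detector; let $\Delta\tau:=\tau-\nu$ and $\Delta T:=T-\nu$. Assume (independent censoring) that conditionally on $\{\nu<\infty,\ \Delta\tau\ge0\}$, $\Delta\tau$ and $\Delta T$ are independent, and that $M_\infty:=\mathbb{E}[\Delta\tau\mid\Delta\tau\ge0,\ \nu<\infty]<\infty$. Let $S^{\mathrm{ADD}}(t):=P(\Delta\tau>t\mid\Delta\tau\ge0,\nu<\infty)$, let $\Delta T^*_{\max}:=\inf\{t\mid P(\Delta T\le t)=1\}$ (assumed finite), and set $$M^{(\mathrm{KM})}_T:=\int_0^{\Delta T^*_{\max}}S^{\mathrm{ADD}}(t)\,dt,\qquad M^{(\mathrm{LB})}_T:=\mathbb{E}[\Delta\tau\mid\nu<\infty,\ 0\le\Delta\tau\le\Delta T],$$ $\mathcal{B}_{\mathrm{TR}}(\hat M^{(\mathrm{KM})}_T):=M^{(\mathrm{KM})}_T-M_\infty$ and $\mathcal{B}_{\mathrm{TR}}(\hat M^{(\mathrm{LB})}_T):=M^{(\mathrm{LB})}_T-M_\infty$. Then $$\mathcal{B}_{\mathrm{TR}}(\hat M^{(\mathrm{LB})}_T)\le\mathcal{B}_{\mathrm{TR}}(\hat M^{(\mathrm{KM})}_T)\le0.$$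
   Context: Setting: a sequence has frames drawn from a pre-change density before the changepoint $\nu$ and a post-change density from $\nu$ on; $\nu$ and $T$ are independent of the observations. $M_\infty$ is the average detection delay (ADD). $M^{(\mathrm{KM})}_T$ is the population version of the KM-ADD estimator with upper limit $b=\Delta T^*_{\max}$, and $M^{(\mathrm{LB})}_T$ the population version of the conventional estimator averaging delays only over sequences whose detection occurs within the sequence. *)

(* Defs.v *)
From HB Require Import structures.
From mathcomp Require Import all_boot all_order all_algebra.
From mathcomp Require Import all_classical all_reals all_analysis.
From mathcomp Require Import measurable_realfun.
Set Implicit Arguments. Unset Strict Implicit. Unset Printing Implicit Defensive.
Import Order.TTheory GRing.Theory Num.Theory.
Import numFieldNormedType.Exports.
Local Open Scope classical_set_scope.
Local Open Scope ring_scope.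
Local Open Scope ereal_scope.

Section defs.
Context (d : measure_display) (Omega : measurableType d) (R : realType)
  (P : probability Omega R).

Definition condP (B A : set Omega) : \bar R := P (B `&` A) / P A.

Definition condE (X : Omega -> \bar R) (A : set Omega) : \bar R :=
  (\int[P]_(w in A) X w) / P A.

Definition cond_indep (X Y : Omega -> \bar R) (C : set Omega) : Prop :=
  forall U V : set (\bar R), measurable U -> measurable V ->
    condP (X @^-1` U `&` Y @^-1` V) C = condP (X @^-1` U) C * condP (Y @^-1` V) C.

Context (nu tau T : Omega -> \bar R).

Definition dtau (w : Omega) : \bar R := tau w - nu w.
Definition dT (w : Omega) : \bar R := T w - nu w.

Definition eventA : set Omega := [set w | nu w < +oo /\ 0 <= dtau w].
Definition eventLB : set Omega :=
  [set w | nu w < +oo /\ 0 <= dtau w /\ dtau w <= dT w].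

Definition Minf : \bar R := condE dtau eventA.

Definition S_ADD (t : R) : \bar R := condP [set w | t%:E < dtau w] eventA.

Definition DeltaTmax : \bar R :=
  ereal_inf (EFin @` [set t : R | P [set w | dT w <= t%:E] = 1]).

Definition M_KM : \bar R :=
  \int[lebesgue_measure]_(t in `[0%R, fine DeltaTmax]) S_ADD t.

Definition M_LB : \bar R := condE dtau eventLB.

Definition bias_KM : \bar R := M_KM - Minf.
Definition bias_LB : \bar R := M_LB - Minf.

End defs.

(* Main.v *)
Require Import Defs.
From HB Require Import structures.
From mathcomp Require Import all_boot all_order all_algebra.
From mathcomp Require Import all_classical all_reals all_analysis.
From mathcomp Require Import measurable_realfun.
From mathcomp Require Import ring lra.
Import Order.TTheory GRing.Theory Num.Theory.
Local Open Scope classical_set_scope.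
Local Open Scope ring_scope.
Local Open Scope ereal_scope.

Lemma layer_cake d (Omega : measurableType d) (R : realType)
  (P : probability Omega R) (S : set Omega) (X : Omega -> \bar R) (c : R) :
  measurable S -> measurable_fun setT X -> (0 <= c)%R ->
  (forall w, S w -> 0 <= X w) ->
  measurable_fun `[0%R, c[ (fun t : R => P ([set w | t%:E < X w] `&` S)) /\
  \int[lebesgue_measure]_(t in `[0%R, c[) P ([set w | t%:E < X w] `&` S)
   = \int[P]_(w in S) mine (X w) c%:E.
Proof.
move=> mS mX c0 X0.
pose h w := fine (mine (X w) c%:E).
pose g := h \_ S.
have mh : measurable_fun S h.
  apply: measurableT_comp; first exact: fine_measurable.
  apply: measurable_mine; last exact: measurable_cst.
  exact: measurable_funS mX.
have mg : measurable_fun setT g by apply/(measurable_restrictT _ mS).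
have hS w : S w -> (h w)%:E = mine (X w) c%:E.
  move=> Sw; rewrite /h fineK//; have := X0 _ Sw.
  by case: (X w) => [r||]//= r0; rewrite /mine; case: ifP.
have g0 w : (0 <= g w)%R.
  rewrite /g patchE; case: ifPn => // /set_mem Sw.
  by rewrite -lee_fin hS// le_min X0.
pose G : {RV P >-> R} := mfun_Sub (f:=g) (mem_set mg).
have GE : (G : Omega -> R) = g by [].
have pre t : (0 <= t < c)%R ->
    G @^-1` `]t, +oo[ = [set w | t%:E < X w] `&` S.
  move=> /andP[t0 tc]; rewrite GE; apply/seteqP; split => w /=.
    rewrite in_itv/= andbT /g patchE; case: ifPn; last by rewrite ltNge t0.
    move=> /set_mem Sw; rewrite -lte_fin hS// lt_min => /andP[+ _]; by [].
  move=> [tX Sw]; rewrite in_itv/= andbT /g patchE mem_set// -lte_fin hS//.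
  by rewrite lt_min tX lte_fin.
have pre0 t : (c <= t)%R -> G @^-1` `]t, +oo[ = set0.
  move=> ct; rewrite GE; apply/seteqP; split => w //=.
  rewrite in_itv/= andbT /g patchE; case: ifPn; last by rewrite ltNge (le_trans c0 ct).
  move=> /set_mem Sw; rewrite -lte_fin hS// lt_min => /andP[_].
  by rewrite lte_fin ltNge ct.
have mccdf := ccdf_measurable G.
have mF : measurable_fun `[0%R, c[ (fun t : R => P ([set w | t%:E < X w] `&` S)).
  apply: (eq_measurable_fun (ccdf G)); last exact: measurable_funS mccdf.
  move=> t; rewrite inE/= in_itv/= => tI.
  by rewrite /ccdf /distribution /pushforward pre.
split => //.
have := @ge0_expectation_ccdf _ _ _ P G g0; rewrite expectation_def.
rewrite (@itv_bndbnd_setU _ _ _ (BLeft c)); last 2 first.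
  by rewrite bnd_simp. by rewrite bnd_simp.
rewrite integral_setU//; last 2 first.
  - exact: measurable_funS mccdf.
  - apply/disj_setPS => t [] /=; rewrite !in_itv/= => /andP[_ tc] /andP[ct _].
    by move: tc; rewrite ltNge ct.
rewrite [X in _ + X]integral0_eq; last first.
  move=> t /=; rewrite in_itv/= andbT => ct.
  by rewrite /ccdf /distribution /pushforward pre0// measure0.
rewrite adde0 => E.
transitivity (\int[lebesgue_measure]_(t in `[0%R, c[) ccdf G t).
  apply: eq_integral => t; rewrite inE/= in_itv/= => tI.
  by rewrite /ccdf /distribution /pushforward pre.
rewrite -E [RHS]integral_mkcond; apply: eq_integral => w _.
rewrite GE /g !patchE; case: ifPn => // /set_mem Sw.
by rewrite hS.
Qed.

Arguments layer_cake {d Omega R} P {S X c}.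

Lemma mset_lt d (Omega : measurableType d) (R : realType) (f g : Omega -> \bar R) :
  measurable_fun setT f -> measurable_fun setT g -> measurable [set w | f w < g w].
Proof. by move=> mf mg; rewrite -[X in measurable X]setTI; exact: measurable_lte. Qed.

Lemma mset_le d (Omega : measurableType d) (R : realType) (f g : Omega -> \bar R) :
  measurable_fun setT f -> measurable_fun setT g -> measurable [set w | f w <= g w].
Proof. by move=> mf mg; rewrite -[X in measurable X]setTI; exact: measurable_lee. Qed.

Lemma PE d (Omega : measurableType d) (R : realType) (P : probability Omega R) (E : set Omega) :
  measurable E -> P E = (fine (P E))%:E.
Proof. by move=> mE; rewrite fineK// fin_num_measure. Qed.
Arguments PE {d Omega R} P {E}.

Lemma Pge0 d (Omega : measurableType d) (R : realType) (P : probability Omega R) (E : set Omega) :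
  measurable E -> (0 <= fine (P E))%R.
Proof. by move=> mE; rewrite -lee_fin -PE. Qed.
Arguments Pge0 {d Omega R} P {E}.

Theorem theorem4p4 (d : measure_display) (Omega : measurableType d) (R : realType)
  (P : probability Omega R) (nu tau T : Omega -> \bar R) :
  measurable_fun setT nu -> measurable_fun setT tau -> measurable_fun setT T ->
  (forall w, nu w = +oo \/ exists n : nat, nu w = (n%:R)%:E) ->
  (forall w, tau w = +oo \/ exists n : nat, tau w = (n%:R)%:E) ->
  (forall w, exists n : nat, T w = (n%:R)%:E) ->
  cond_indep P (dtau nu tau) (dT nu T) (eventA nu tau) ->
  0 < P (eventLB nu tau T) ->
  Minf P nu tau < +oo ->
  DeltaTmax P nu T \is a fin_num ->
  bias_LB P nu tau T <= bias_KM P nu tau T /\ bias_KM P nu tau T <= 0.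
Proof.
move=> mnu mtau mT hnu htau hT indep PL0 Minfoo DTfin.
set X := dtau nu tau; set Y := dT nu T; set A := eventA nu tau; set L := eventLB nu tau T.
have mX : measurable_fun setT X by exact: emeasurable_funB.
have mY : measurable_fun setT Y by exact: emeasurable_funB.
have mA : measurable A.
  apply: (@measurableI _ _ [set w | nu w < +oo] [set w | 0 <= X w]).
    exact: mset_lt mnu (measurable_cst _).
  exact: mset_le (measurable_cst _) mX.
have mXY : measurable [set w | X w <= Y w] by exact: mset_le.
have mL : measurable L.
  have -> : L = A `&` [set w | X w <= Y w].
    by apply/seteqP; split => w /=; rewrite /L /A /eventLB /eventA /=; tauto.
  exact: measurableI.
have LA : L `<=` A by move=> w [? []]; split.
have mXt (t : R) : measurable [set w | t%:E < X w] by exact: mset_lt (measurable_cst _) mX.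
have mYt (t : R) : measurable [set w | t%:E < Y w] by exact: mset_lt (measurable_cst _) mY.
have mYle (t : R) : measurable [set w | Y w <= t%:E] by exact: mset_le mY (measurable_cst _).
have key (t : R) : (fine (P ([set w | (t%:E < X w)%E] `&` L)) * fine (P A) <=
                    fine (P ([set w | (t%:E < X w)%E] `&` A)) * fine (P L))%R.
  set Xt := [set w | (t%:E < X w)%E]; set Yt := [set w | (t%:E < Y w)%E].
  have mU : measurable [set x : \bar R | (t%:E < x)%E].
    by apply: mset_lt; [exact: measurable_cst|exact: measurable_id].
  have hind := indep _ _ mU mU; rewrite /condP in hind.
  have mXYA : measurable ((Xt `&` Yt) `&` A) by apply: measurableI; [apply: measurableI; [exact: mXt|exact: mYt]|exact: mA].
  have mXA : measurable (Xt `&` A) by apply: measurableI; [exact: mXt|exact: mA].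
  have mYA : measurable (Yt `&` A) by apply: measurableI; [exact: mYt|exact: mA].
  have a0 : (0 < fine (P A))%R.
    rewrite -lte_fin -PE//; apply: (lt_le_trans PL0).
    by apply: le_measure => //; rewrite inE.
  have hy : (fine (P ((Xt `&` Yt) `&` A)) * fine (P A) = fine (P (Xt `&` A)) * fine (P (Yt `&` A)))%R.
    move: hind.
    have -> : X @^-1` [set x | (t%:E < x)%E] `&` Y @^-1` [set x | (t%:E < x)%E] = Xt `&` Yt by [].
    have -> : X @^-1` [set x | (t%:E < x)%E] = Xt by [].
    have -> : Y @^-1` [set x | (t%:E < x)%E] = Yt by [].
    rewrite (PE P mXYA) (PE P mXA) (PE P mYA) (PE P mA).
    set y := fine (P ((Xt `&` Yt) `&` A)); set e := fine (P (Xt `&` A)).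
    set f := fine (P (Yt `&` A)); set a := fine (P A).
    have an0 : (a == 0%R) = false by apply: gt_eqF; exact: a0.
    rewrite inver an0 -!EFinM; move=> hE; have hind2 := EFin_inj hE; rewrite /=.
    have an : a != 0%R by rewrite an0.
    have -> : y = (y / a * a)%R by rewrite divfK.
    by rewrite hind2; field.
  have add (E B : set Omega) : measurable E -> measurable B ->
      fine (P E) = (fine (P (E `\` B)) + fine (P (E `&` B)))%R.
    move=> mE mB; rewrite (measureDI P mE mB) fineD ?fin_num_measure//.
      exact: measurableD. exact: measurableI.
  have mono (E B : set Omega) : measurable E -> measurable B -> E `<=` B ->
      (fine (P E) <= fine (P B))%R.
    move=> mE mB EB; apply: fine_le; rewrite ?fin_num_measure//.
    by apply: le_measure => //; rewrite inE.
  have mXL : measurable (Xt `&` L) by apply: measurableI; [exact: mXt|exact: mL].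
  have xy : (fine (P (Xt `&` L)) <= fine (P ((Xt `&` Yt) `&` A)))%R.
    apply: mono => // w [/= tX [nuw [X0 XY]]]; split; last by split.
    by split => //=; apply: (lt_le_trans tX).
  have ea : (fine (P (Xt `&` A)) <= fine (P A))%R by apply: mono => // w [].
  have e0 : (0 <= fine (P (Xt `&` A)))%R by exact: (Pge0 P).
  have lE := add L Xt mL (mXt t).
  have fE := add (Yt `&` A) Xt mYA (mXt t).
  have m1 : (fine (P ((Yt `&` A) `\` Xt)) <= fine (P (L `\` Xt)))%R.
    apply: mono; [apply: measurableD => //; exact: mXt|apply: measurableD => //; exact: mXt|].
    move=> w [[/= tY [nuw X0]] nX]; split => //; split => //; split => //.
    rewrite /Xt /= in nX; move/negP: nX; rewrite -leNgt => Xt'.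
    exact: (le_trans Xt' (ltW tY)).
  have m2 : (fine (P ((Yt `&` A) `&` Xt)) <= fine (P ((Xt `&` Yt) `&` A)))%R.
    apply: mono => //; first exact: (measurableI _ _ mYA (mXt t)).
    by move=> w [[? ?] ?]; split.
  rewrite setIC in lE.
  move: hy xy ea e0 lE fE m1 m2.
  set x := fine (P (Xt `&` L)); set y := fine (P ((Xt `&` Yt) `&` A)).
  set e := fine (P (Xt `&` A)); set a := fine (P A); set l := fine (P L).
  set f := fine (P (Yt `&` A)); set k := fine (P ((Yt `&` A) `\` Xt)).
  set m := fine (P (L `\` Xt)); set z := fine (P ((Yt `&` A) `&` Xt)).
  move=> hy xy ea e0 lE fE m1 m2.
  have p1 : (0 <= e * (l - x - f + y))%R by apply: mulr_ge0 => //; lra.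
  have p2 : (0 <= (a - e) * (y - x))%R by apply: mulr_ge0; lra.
  nra.
set Sset := [set t : R | P [set w | Y w <= t%:E] = 1].
have DTE : DeltaTmax P nu T = ereal_inf (EFin @` Sset) by [].
set b := fine (DeltaTmax P nu T).
have DTb : DeltaTmax P nu T = b%:E by rewrite /b fineK.
have b0 : (0 <= b)%R.
  rewrite -lee_fin -DTb DTE; apply: le_ereal_inf_tmp => _ [t St <-].
  rewrite lee_fin leNgt; apply/negP => t0.
  have disj : L `&` [set w | Y w <= t%:E] = set0.
    apply/seteqP; split => // w [[_ [X0 XY]] /= Yt].
    have : (0 <= t%:E)%E := le_trans X0 (le_trans XY Yt).
    by rewrite lee_fin leNgt t0.
  have h2 : (P L + P [set w | (Y w <= t%:E)%E] <= 1)%E.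
    have := probability_le1 P (measurableU _ _ mL (mYle t)).
    by rewrite measureU// => h; exact: h.
  have St1 : P [set w | (Y w <= t%:E)%E] = 1 := St.
  move: h2; rewrite St1 (PE P mL) -EFinD lee_fin => h1.
  move: PL0; rewrite (PE P mL) lte_fin; lra.
have PYt0 (t : R) : Sset t -> P [set w | t%:E < Y w] = 0.
  move=> St; have -> : [set w | t%:E < Y w] = ~` [set w | Y w <= t%:E].
    by apply/seteqP; split => w /=; rewrite ltNge => /negP.
  by rewrite probability_setC// St subee.
have PYb : P [set w | b%:E < Y w] = 0.
  apply/eqP; rewrite eq_le measure_ge0 andbT.
  pose F n := [set w | (b + n.+1%:R^-1)%:E < Y w].
  have mF n : measurable (F n) by exact: mYt.
  have F0 n : P (F n) = 0.
    have e0 : (0 < n.+1%:R^-1 :> R)%R by rewrite invr_gt0 ltr0n.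
    have [_ [t St <-]] := lb_ereal_inf_adherent e0 DTfin.
    rewrite -DTE DTb -EFinD lte_fin => tb.
    apply/eqP; rewrite eq_le measure_ge0 andbT -(PYt0 _ St).
    apply: (le_measure _ (mem_set (mF n)) (mem_set (mYt t))).
    by move=> w /=; apply: le_lt_trans; rewrite lee_fin ltW.
  have sub : [set w | b%:E < Y w] `<=` \bigcup_n F n.
    move=> w /=; case Ew: (Y w) => [r||]//=.
      by rewrite lte_fin => /ltr_add_invr [k hk]; exists k => //; rewrite /F /= Ew lte_fin.
    by move=> _; exists 0%N => //; rewrite /F /= Ew ltey.
  apply: (le_trans (measure_sigma_subadditive P mF (mYt b) sub)).
  by rewrite eseries0// => i _ _; exact: F0.
have X0A w : A w -> (0 <= X w)%E by case.
have X0L w : L w -> (0 <= X w)%E by case=> _ [].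
have [mFL LCL] := layer_cake P mL mX b0 X0L.
have [mFA LCA] := layer_cake P mA mX b0 X0A.
have mmin : measurable_fun setT (fun w => mine (X w) b%:E).
  by apply: measurable_mine => //; exact: measurable_cst.
have intL : (\int[P]_(w in L) X w = \int[P]_(w in L) mine (X w) b%:E)%E.
  apply: ge0_ae_eq_integral => //.
  - exact: measurable_funS mX.
  - exact: measurable_funS mmin.
  - by move=> w Lw; rewrite le_min X0L// lee_fin.
  - exists [set w | b%:E < Y w]; split; [exact: mYt|exact: PYb|].
    move=> w /= H; rewrite ltNge; apply/negP => Yb; apply: H => Lw.
    case: Lw => _ [_ XY]; rewrite min_l//; exact: le_trans XY Yb.
have pA0 : (0 < fine (P A))%R.
  rewrite -lte_fin -PE//; apply: (lt_le_trans PL0).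
  by apply: le_measure => //; rewrite inE.
have pL0 : (0 < fine (P L))%R by rewrite -lte_fin -PE.
have MLB : M_LB P nu tau T = (\int[lebesgue_measure]_(t in `[0%R, b[)
    P ([set w | (t%:E < X w)%E] `&` L)) * (fine (P L))^-1%:E.
  rewrite /M_LB /condE -/X -/L intL -LCL {1}(PE P mL) inver gt_eqF//.
have mSA : measurable_fun `[0%R, b[ (fun t => P ([set w | (t%:E < X w)%E] `&` A) * (fine (P A))^-1%:E).
  by apply: emeasurable_funM => //; exact: measurable_cst.
have MKM : M_KM P nu tau T = (\int[lebesgue_measure]_(t in `[0%R, b[)
    (P ([set w | (t%:E < X w)%E] `&` A) * (fine (P A))^-1%:E)).
  rewrite /M_KM -/b -integral_itv_bndo_bndc; last first.
    apply: (eq_measurable_fun _ _ mSA) => t _.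
    by rewrite /S_ADD /condP -/X -/A {2}(PE P mA) inver gt_eqF.
  apply: eq_integral => t _.
  by rewrite /S_ADD /condP -/X -/A {1}(PE P mA) inver gt_eqF.
have ge0A t : (0 <= P ([set w | (t%:E < X w)%E] `&` A))%E by exact: measure_ge0.
have LBKM : (M_LB P nu tau T <= M_KM P nu tau T)%E.
  rewrite MLB MKM -ge0_integralZr//; last first.
    by rewrite lee_fin invr_ge0 ltW.
  apply: ge0_le_integral => //.
  - by move=> t _; rewrite mule_ge0// lee_fin invr_ge0 ltW.
  - by apply: emeasurable_funM => //; exact: measurable_cst.
  move=> t _.
  rewrite (PE P (measurableI _ _ (mXt t) mL)) (PE P (measurableI _ _ (mXt t) mA)).
  rewrite -!EFinM lee_fin.
  have := key t.
  set x := fine (P ([set w | (t%:E < X w)%E] `&` L)).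
  set e := fine (P ([set w | (t%:E < X w)%E] `&` A)).
  set a := fine (P A); set l := fine (P L) => k.
  have an : a != 0%R := lt0r_neq0 pA0.
  have ln : l != 0%R := lt0r_neq0 pL0.
  rewrite -subr_ge0.
  have -> : (e / a - x / l = (e * l - x * a) * (l^-1 * a^-1))%R by field; rewrite an ln.
  by apply: mulr_ge0; [rewrite subr_ge0|rewrite mulr_ge0// invr_ge0 ltW].
have KMinf : (M_KM P nu tau T <= Minf P nu tau)%E.
  rewrite MKM ge0_integralZr//; last first.
    by rewrite lee_fin invr_ge0 ltW.
  rewrite LCA /Minf /condE -/X -/A {2}(PE P mA) inver (gt_eqF pA0).
  apply: lee_wpmul2r; first by rewrite lee_fin invr_ge0 ltW.
  apply: ge0_le_integral => //.
  - by move=> w Aw; rewrite le_min X0A// lee_fin.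
  - exact: measurable_funS mmin.
  - exact: measurable_funS mX.
  - by move=> w _; rewrite ge_min lexx.
split.
  by rewrite /bias_LB /bias_KM; apply: leeB.
by rewrite /bias_KM sube_le0.
Qed.
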